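(* Let $\mathbf{L}=\langle L,\leq,0,1\rangle$ be a totally ordered complete lattice (regarded as a Gödel algebra), let $\varphi$ be a formula of a first-order language $\mathcal{J}$ and let $\mathbf{M}$ be a finite $\mathbf{L}$-structure for $\mathcal{J}$. Let $f\colon L\to L$ be an order embedding with $f(0)=0$ and $f(1)=1$. Then $\mathcal{D}_{\mathbf{M},\varphi}\circ f=\mathcal{D}_{\mathbf{M}\circ f,\varphi}$, where $\mathbf{M}\circ f$ is the $\mathbf{L}$-structure with the same universe as $\mathbf{M}$ and $\mathbf{r}^{\mathbf{M}\circ f}=\mathbf{r}^{\mathbf{M}}\circ f$ for every relation symbol $\mathbf{r}$ of $\mathcal{J}$.
   Context: On $L$ define $a\rightarrow b=1$ if $a\leq b$ and $a\rightarrow b=b$ otherwise. A language $\mathcal{J}$ is a set of relation symbols with arities; $X$ is a countable set of object variables. Formulas: $\overline{0}$; $\mathbf{r}(x_1,\dots,x_n)$ for $n$-ary $\mathbf{r}$ and $x_i\in X$; $\varphi\wedge\psi$, $\varphi\Rightarrow\psi$; $(\forall x)\varphi$, $(\exists x)\varphi$. An $\mathbf{L}$-structure $\mathbf{M}$ consists of a non-empty universe $M$ and, for each $n$-ary $\mathbf{r}$, a map $\mathbf{r}^{\mathbf{M}}\colon M^n\to L$; it is finite if each $\mathbf{r}^{\mathbf{M}}$ takes a nonzero value on only finitely many arguments. For a valuation $v\colon X\to M$: $\|\overline{0}\|_{\mathbf{M},v}=0$, $\|\mathbf{r}(x_1,\dots,x_n)\|_{\mathbf{M},v}=\mathbf{r}^{\mathbf{M}}(v(x_1),\dots,v(x_n))$,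 $\|\varphi\wedge\psi\|=\inf\{\|\varphi\|,\|\psi\|\}$, $\|\varphi\Rightarrow\psi\|=\|\varphi\|\rightarrow\|\psi\|$, $\|(\forall x)\varphi\|_{\mathbf{M},v}=\inf\{\|\varphi\|_{\mathbf{M},w};\ w=_x v\}$, $\|(\exists x)\varphi\|_{\mathbf{M},v}=\sup\{\|\varphi\|_{\mathbf{M},w};\ w=_x v\}$, where $w=_x v$ means $w$ agrees with $v$ except possibly at $x$. If the free variables of $\varphi$ are $x_1,\dots,x_n$ and $R=\{x_1,\dots,x_n\}$ (used as attributes with values in $M$), $\mathcal{D}_{\mathbf{M},\varphi}$ is the map on tuples $r\colon R\to M$ given by $\mathcal{D}_{\mathbf{M},\varphi}(r)=\|\varphi\|_{\mathbf{M},v}$ for any valuation $v$ with $v(x_i)=r(x_i)$ for all $i$. For a map $g$ into $L$, $g\circ f$ denotes $x\mapsto f(g(x))$. $f$ is an order embedding if $a\leq b\iff f(a)\leq f(b)$. *)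

(* Defs.v *)
From HB Require Import structures.
From Stdlib Require List.
From mathcomp Require Import all_boot all_order.
Set Implicit Arguments. Unset Strict Implicit. Unset Printing Implicit Defensive.
Import Order.TTheory.
Local Open Scope order_scope.

Section Syntax.
Variables (Sym : Type) (ar : Sym -> nat).

Inductive formula : Type :=
| FBot : formula
| FRel (r : Sym) (xs : 'I_(ar r) -> nat) : formula
| FAnd : formula -> formula -> formula
| FImp : formula -> formula -> formula
| FAll : nat -> formula -> formula
| FEx : nat -> formula -> formula.

Fixpoint fv (phi : formula) : seq nat :=
  match phi with
  | FBot => [::]
  | FRel r xs => undup [seq xs i | i <- enum 'I_(ar r)]
  | FAnd a b => undup (fv a ++ fv b)
  | FImp a b => undup (fv a ++ fv b)
  | FAll x a => [seq y <- fv a | y != x]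
  | FEx x a => [seq y <- fv a | y != x]
  end.
End Syntax.

Definition is_sup d (L : porderType d) (S : L -> Prop) (l : L) :=
  (forall a, S a -> a <= l) /\ (forall b, (forall a, S a -> a <= b) -> l <= b).
Definition is_inf d (L : porderType d) (S : L -> Prop) (l : L) :=
  (forall a, S a -> l <= a) /\ (forall b, (forall a, S a -> b <= a) -> b <= l).

Definition gimp d (L : tbOrderType d) (a b : L) : L :=
  if a <= b then \top else b.

Record Lstructure (Sym : Type) (ar : Sym -> nat) (L : Type) := LStr {
  univ : Type;
  univ_witness : univ;
  rel : forall r : Sym, ('I_(ar r) -> univ) -> L
}.

(* finite: each r^M is nonzero on only finitely many arguments *)
Definition finite_structure d (L : tbOrderType d) Sym (ar : Sym -> nat)
    (M : Lstructure ar L) : Prop :=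
  forall r : Sym, exists s : seq ('I_(ar r) -> univ M),
    forall a, @rel _ _ _ M r a <> \bot -> Stdlib.Lists.List.In a s.

(* M o f : same universe, r^(M o f) = f o r^M (paper's notation r^M o f) *)
Definition compose_str Sym (ar : Sym -> nat) (L : Type) (M : Lstructure ar L)
    (f : L -> L) : Lstructure ar L :=
  @LStr Sym ar L (univ M) (univ_witness M) (fun r a => f (@rel _ _ _ M r a)).

Section Semantics.
Variables (d : Order.disp_t) (L : tbOrderType d)
  (sup inf : (L -> Prop) -> L) (Sym : Type) (ar : Sym -> nat)
  (M : Lstructure ar L).

Fixpoint eval (phi : formula ar) (v : nat -> univ M) : L :=
  match phi with
  | FBot => \bot
  | FRel r xs => @rel _ _ _ M r (fun i => v (xs i))
  | FAnd a b => inf (fun c => c = eval a v \/ c = eval b v)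
  | FImp a b => gimp (eval a v) (eval b v)
  | FAll x a => inf (fun c => exists w : nat -> univ M,
                      (forall y, y <> x -> w y = v y) /\ c = eval a w)
  | FEx x a => sup (fun c => exists w : nat -> univ M,
                      (forall y, y <> x -> w y = v y) /\ c = eval a w)
  end.

(* tuples on the attribute set R = free variables of phi *)
Definition attr_tuple (phi : formula ar) := {x : nat | x \in fv phi} -> univ M.

(* a valuation extending a tuple (values outside R are irrelevant) *)
Definition ext_val (phi : formula ar) (r : attr_tuple phi) : nat -> univ M :=
  fun y => match @insub nat (fun x => x \in fv phi) _ y with
           | Some s => r s
           | None => univ_witness M
           end.

Definition Dmap (phi : formula ar) (r : attr_tuple phi) : L :=
  eval phi (ext_val r).
End Semantics.

(* Main.v *)
Require Import Defs.
From HB Require Import structures.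
From mathcomp Require Import all_boot all_order.
From Stdlib Require Import Classical.
Import Order.TTheory.
Local Open Scope order_scope.

Section Aux.
Variables (d : Order.disp_t) (L : tbOrderType d).

Lemma fin_min (l : seq L) : forall (S : L -> Prop),
  (forall c, S c -> List.In c l) -> (exists c, S c) ->
  exists m, S m /\ forall c, S c -> m <= c.
Proof.
elim: l => [|x l IH] S Hsub Hne.
  by case: Hne => c /Hsub.
case: (classic (exists c, S c /\ c <> x)) => [Hex|Hnex].
  have [m [[Sm mx] Hm]] : exists m, (S m /\ m <> x) /\ forall c, (S c /\ c <> x) -> m <= c.
    apply: IH => //; move=> c [Sc cx]; by case: (Hsub c Sc) => // e; case: cx.
  case: (classic (S x)) => Sx.
    have [hxm|hmx] := leP x m.
      exists x; split => // c Sc; case: (classic (c = x)) => [->//|cx].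
      exact: le_trans hxm (Hm c (conj Sc cx)).
    exists m; split => // c Sc; case: (classic (c = x)) => [->|cx]; first exact: ltW.
    exact: Hm.
  exists m; split => // c Sc; apply: Hm; split => // e; by rewrite e in Sc.
case: Hne => c Sc.
have cx : c = x by apply: NNPP => cx; apply: Hnex; exists c.
subst c; exists x; split => // c Sc'.
have -> : c = x by apply: NNPP => cx; apply: Hnex; exists c.
exact: le_refl.
Qed.

Lemma fin_max (l : seq L) : forall (S : L -> Prop),
  (forall c, S c -> List.In c l) -> (exists c, S c) ->
  exists m, S m /\ forall c, S c -> c <= m.
Proof.
elim: l => [|x l IH] S Hsub Hne.
  by case: Hne => c /Hsub.
case: (classic (exists c, S c /\ c <> x)) => [Hex|Hnex].
  have [m [[Sm mx] Hm]] : exists m, (S m /\ m <> x) /\ forall c, (S c /\ c <> x) -> c <= m.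
    apply: IH => //; move=> c [Sc cx]; by case: (Hsub c Sc) => // e; case: cx.
  case: (classic (S x)) => Sx.
    have [hxm|hmx] := leP x m.
      exists m; split => // c Sc; case: (classic (c = x)) => [->//|cx].
      exact: Hm.
    exists x; split => // c Sc; case: (classic (c = x)) => [->//|cx].
    exact: le_trans (Hm c (conj Sc cx)) (ltW hmx).
  exists m; split => // c Sc; apply: Hm; split => // e; by rewrite e in Sc.
case: Hne => c Sc.
have cx : c = x by apply: NNPP => cx; apply: Hnex; exists c.
subst c; exists x; split => // c Sc'.
have -> : c = x by apply: NNPP => cx; apply: Hnex; exists c.
exact: le_refl.
Qed.

Variables (sup inf : (L -> Prop) -> L)
  (Hsup : forall S, is_sup S (sup S)) (Hinf : forall S, is_inf S (inf S)).

Lemma inf_mem (l : seq L) (S : L -> Prop) :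
  (forall c, S c -> List.In c l) -> (exists c, S c) ->
  S (inf S) /\ forall c, S c -> inf S <= c.
Proof.
move=> H1 H2; have [m [Sm Hm]] := @fin_min l S H1 H2.
have -> : inf S = m.
  apply/le_anti; rewrite (proj1 (Hinf S) m Sm) /=.
  exact: (proj2 (Hinf S)).
by [].
Qed.

Lemma sup_mem (l : seq L) (S : L -> Prop) :
  (forall c, S c -> List.In c l) -> (exists c, S c) ->
  S (sup S) /\ forall c, S c -> c <= sup S.
Proof.
move=> H1 H2; have [m [Sm Hm]] := @fin_max l S H1 H2.
have -> : sup S = m.
  apply/le_anti; rewrite (proj1 (Hsup S) m Sm) andbT.
  exact: (proj2 (Hsup S)).
by [].
Qed.

Variable (f : L -> L) (Hf : forall a b : L, a <= b <-> f a <= f b).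

Lemma inf_map (l : seq L) (S T : L -> Prop) :
  (forall c, S c -> List.In c l) -> (exists c, S c) ->
  (forall c, T c <-> exists c', S c' /\ c = f c') ->
  f (inf S) = inf T.
Proof.
move=> H1 H2 HT; have [Sm Hm] := @inf_mem l S H1 H2.
have Tm : T (f (inf S)) by apply/HT; exists (inf S).
apply/le_anti; rewrite (proj1 (Hinf T) _ Tm) andbT.
apply: (proj2 (Hinf T)) => a /HT [c' [Sc' ->]]; apply: (proj1 (Hf _ _)); exact: Hm Sc'.
Qed.

Lemma sup_map (l : seq L) (S T : L -> Prop) :
  (forall c, S c -> List.In c l) -> (exists c, S c) ->
  (forall c, T c <-> exists c', S c' /\ c = f c') ->
  f (sup S) = sup T.
Proof.
move=> H1 H2 HT; have [Sm Hm] := @sup_mem l S H1 H2.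
have Tm : T (f (sup S)) by apply/HT; exists (sup S).
apply/le_anti; rewrite (proj1 (Hsup T) _ Tm) /=.
apply: (proj2 (Hsup T)) => a /HT [c' [Sc' ->]]; apply: (proj1 (Hf _ _)); exact: Hm Sc'.
Qed.
End Aux.

Theorem corollary8 (d : Order.disp_t) (L : tbOrderType d)
  (sup inf : (L -> Prop) -> L)
  (Hsup : forall S, is_sup S (sup S)) (Hinf : forall S, is_inf S (inf S))
  (Sym : Type) (ar : Sym -> nat) (phi : formula ar) (M : Lstructure ar L)
  (HM : finite_structure M) (f : L -> L)
  (Hf : forall a b : L, a <= b <-> f a <= f b)
  (Hf0 : f \bot = \bot) (Hf1 : f \top = \top) :
  forall r : attr_tuple M phi,
    f (Dmap sup inf r) = Dmap (M := compose_str M f) (phi := phi) sup inf r.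
Proof.
have Hfin : forall psi : formula ar, exists l : seq L,
    forall v : nat -> univ M, List.In (eval sup inf psi v) l.
  elim=> [|r xs|a [la Ha] b [lb Hb]|a [la Ha] b [lb Hb]|x a [la Ha]|x a [la Ha]].
  - by exists [:: \bot] => v; left.
  - case: (HM r) => s Hs; exists (\bot :: map (@Defs.rel _ _ _ M r) s) => v /=.
    case: (classic (@Defs.rel _ _ _ M r (fun i => v (xs i)) = \bot)) => e; first by left.
    by right; apply: List.in_map; apply: Hs.
  - exists (la ++ lb) => v /=.
    set S := (fun c => c = eval sup inf a v \/ c = eval sup inf b v).
    have P1 : forall c, S c -> List.In c (la ++ lb).
      by move=> c [->|->]; apply: List.in_or_app; [left; exact: Ha|right; exact: Hb].
    have P2 : exists c, S c by exists (eval sup inf a v); left.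
    have [H _] := @inf_mem d L inf Hinf (la ++ lb) S P1 P2.
    exact: P1.
  - exists (\top :: lb) => v /=; rewrite /gimp; case: ifP => _; first by left.
    by right.
  - exists la => v /=.
    set S := (fun c => exists w, (forall y, y <> x -> w y = v y) /\ c = eval sup inf a w).
    have P1 : forall c, S c -> List.In c la by move=> c [w [_ ->]].
    have P2 : exists c, S c by exists (eval sup inf a v), v.
    have [H _] := @inf_mem d L inf Hinf la S P1 P2.
    exact: P1.
  - exists la => v /=.
    set S := (fun c => exists w, (forall y, y <> x -> w y = v y) /\ c = eval sup inf a w).
    have P1 : forall c, S c -> List.In c la by move=> c [w [_ ->]].
    have P2 : exists c, S c by exists (eval sup inf a v), v.
    have [H _] := @sup_mem d L sup Hsup la S P1 P2.
    exact: P1.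
have main : forall (psi : formula ar) (v : nat -> univ M),
    f (eval sup inf psi v) = eval (M := compose_str M f) sup inf psi v.
  elim=> [|r xs|a IHa b IHb|a IHa b IHb|x a IHa|x a IHa] v /=.
  - exact: Hf0.
  - by [].
  - have [la Ha] := Hfin a; have [lb Hb] := Hfin b.
    apply: (@inf_map d L inf Hinf f Hf (la ++ lb)).
    + by move=> c [->|->]; apply: List.in_or_app; [left; apply: Ha|right; apply: Hb].
    + by exists (eval sup inf a v); left.
    + move=> c; rewrite -IHa -IHb; split.
      * by case=> ->; [exists (eval sup inf a v); split => //; left
                      |exists (eval sup inf b v); split => //; right].
      * by case=> c' [[->|->] ->]; [left|right].
  - rewrite -IHa -IHb /gimp.
    have HH := Hf (eval sup inf a v) (eval sup inf b v).
    case E: (eval sup inf a v <= eval sup inf b v); case E': (f _ <= f _) => //.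
    + by move/HH: E; rewrite E'.
    + by move/HH: E'; rewrite E.
  - have [la Ha] := Hfin a.
    apply: (@inf_map d L inf Hinf f Hf la).
    + by move=> c [w [_ ->]].
    + by exists (eval sup inf a v), v.
    + move=> c; split.
      * by case=> w [Hw ->]; exists (eval sup inf a w); split; [exists w|rewrite IHa].
      * by case=> c' [[w [Hw ->]] ->]; exists w; split => //; rewrite IHa.
  - have [la Ha] := Hfin a.
    apply: (@sup_map d L sup Hsup f Hf la).
    + by move=> c [w [_ ->]].
    + by exists (eval sup inf a v), v.
    + move=> c; split.
      * by case=> w [Hw ->]; exists (eval sup inf a w); split; [exists w|rewrite IHa].
      * by case=> c' [[w [Hw ->]] ->]; exists w; split => //; rewrite IHa.
move=> r; exact: main.
Qed.
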